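(* Let $p$ be an odd prime and $G$ the non-abelian group of order $p^3$ and exponent $p$. Let $S$ be a sequence over $G$ of length $3p-2$ none of whose terms lies in $Z(G)$, and suppose that for some non-central $z$-class $\mathcal{K}$ of $G$ at least $2p-2$ terms of $S$ (counted with multiplicity) lie in $\mathcal{K}$. Then $S$ has a non-empty product-one subsequence.
   Context: $G = \langle x, y : x^p = y^p = 1,\ [y,x] \text{ central}\rangle$ is the Heisenberg group of order $p^3$ and exponent $p$, with $Z(G)=[G,G]$ of order $p$. For $g\in G\setminus Z(G)$, its $z$-class is $\mathcal{K}[g] = \{g^\lambda u : 1\le\lambda\le p-1,\ u\in Z(G)\} = C_G(g)\setminus Z(G)$; there are $p+1$ such non-central $z$-classes. A sequence over $G$ is a finite unordered list (multiset) of elements of $G$; a subsequence is a sub-multiset; a non-empty sequence is product-one if some ordering of its terms has product $1$. *)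

(* Defs.v *)
From mathcomp Require Import all_boot all_fingroup.
From mathcomp Require Import center abelian.
Set Implicit Arguments. Unset Strict Implicit. Unset Printing Implicit Defensive.

Local Open Scope group_scope.

(* The z-class K[g] = { g^l u : 1 <= l <= p-1, u in Z(G) } of g in G,
   where p is the (prime) exponent of G. *)
Definition zclass (gT : finGroupType) (G : {group gT}) (p : nat) (g : gT)
  : {set gT} :=
  [set g ^+ l * u | l : 'I_p, u : gT in 'Z(G) & 0 < l].

Definition product_one (gT : finGroupType) (T : seq gT) : Prop :=
  T != [::] /\ exists T' : seq gT, perm_eq T' T /\ \prod_(x <- T') x = 1.

Definition has_prod_one_subseq (gT : finGroupType) (S : seq gT) : Prop :=
  exists m : bitseq, product_one (mask m S).

(* Main.v *)
Require Import Defs.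
From mathcomp Require Import all_boot all_fingroup.
From mathcomp Require Import center abelian.
From mathcomp Require Import all_algebra all_solvable.
From mathcomp Require Import ring zify.
From Stdlib Require Import Classical.
Set Implicit Arguments. Unset Strict Implicit. Unset Printing Implicit Defensive.

Module Poly.
Import GRing.Theory.
Local Open Scope ring_scope.
Lemma ex_one (S : comNzRingType) (x : S) n : exists A, (1 + x) ^+ n = 1 + x * A.
Proof.
elim: n => [|n [A hA]]; first by exists 0; rewrite expr0 mulr0 addr0.
by exists (A + 1 + x * A); rewrite exprS hA; ring.
Qed.
Lemma coef_1X (S : comNzRingType) d b :
  ((1 + 'X : {poly S}) ^+ d)`_b = 'C(d, b)%:R.
Proof.
rewrite exprDn coef_sum.
under eq_bigr => i _ do rewrite expr1n mul1r coefMn coefXn.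
case: (ltnP d b) => hdb.
  rewrite bin_small // big1 // => i _.
  have: (b == i) = false by apply/negbTE; rewrite neq_ltn (leq_trans (ltn_ord i) hdb) orbT.
  by move=> ->; rewrite mul0rn.
rewrite (bigD1 (Ordinal (leq_ltn_trans hdb (ltnSn d)))) //= eqxx big1 ?addr0 //.
move=> i /eqP hi.
have: (b == i) = false by apply/negbTE/eqP => e; apply: hi; apply: val_inj.
by move=> ->; rewrite mul0rn.
Qed.

Section Univ.
Variable R : comNzRingType.
Variable p : nat.
Hypothesis hp : p \in [pchar R].

Definition L1 (q : {poly R}) : R := \sum_(a < p) q`_a * (-1) ^+ a.

Lemma L1D q1 q2 : L1 (q1 + q2) = L1 q1 + L1 q2.
Proof. by rewrite /L1 -big_split; apply: eq_bigr => i _; rewrite coefD mulrDl. Qed.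
Lemma L1B q1 q2 : L1 (q1 - q2) = L1 q1 - L1 q2.
Proof. by rewrite /L1 -sumrB; apply: eq_bigr => i _; rewrite coefB mulrBl. Qed.
Lemma L1Xp q : L1 ('X^p * q) = 0.
Proof. by rewrite /L1 big1 // => i _; rewrite coefXnM ltn_ord mul0r. Qed.

Lemma pr_p : prime p. Proof. exact: pcharf_prime hp. Qed.

Lemma L1_binom c : L1 ((1 + 'X) ^+ c) = (p %| c)%:R.
Proof.
have hpn : [pchar {poly R}].-nat p.
  apply: sub_in_pnat (pnat_id pr_p) => q _ /eqnP ->.
  by rewrite pchar_poly.
rewrite {1}(divn_eq c p) exprD mulnC exprM exprDn_pchar // expr1n.
have [A ->] := ex_one ('X ^+ p : {poly R}) ((c %/ p)%N).
rewrite mulrDl mul1r -mulrA L1D L1Xp addr0.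
have hr : ((c %% p) < p)%N by rewrite ltn_mod prime_gt0 ?pr_p.
rewrite /L1 -(horner_coef_wide (-1) (p := (1 + 'X) ^+ ((c %% p)%N))).
  rewrite hornerE !hornerE addrN expr0n.
  by rewrite /dvdn; case: ((c %% p)%N).
have -> : (1 + 'X : {poly R}) = 'X - (-1)%:P by rewrite polyCN polyC1 opprK addrC.
by rewrite size_exp_XsubC.
Qed.
Lemma L1Mn q n : L1 (q * n%:R) = L1 q * n%:R.
Proof.
rewrite /L1 mulr_suml; apply: eq_bigr => i _.
by rewrite mulr_natr coefMn mulr_natr mulrnAl.
Qed.

Lemma L1Xa a q : (p <= a)%N -> L1 ('X^a * q) = 0.
Proof.
move=> hpa; rewrite /L1 big1 // => i _.
by rewrite coefXnM (leq_trans (ltn_ord i) hpa) mul0r.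
Qed.

Lemma L1_coef d : L1 ((1 + 'X) ^+ d) = \sum_(a < p) 'C(d, a)%:R * (-1) ^+ a.
Proof. by apply: eq_bigr => i _; rewrite coef_1X. Qed.

Definition uu : {poly {poly R}} := ('X)%:P.
Definition ww : {poly {poly R}} := 'X.

Definition phi (Q : {poly {poly R}}) : R := \sum_(b < p) L1 (Q`_b) * (-1) ^+ b.

Lemma phiD Q1 Q2 : phi (Q1 + Q2) = phi Q1 + phi Q2.
Proof. by rewrite /phi -big_split; apply: eq_bigr => i _; rewrite coefD L1D mulrDl. Qed.
Lemma phiB Q1 Q2 : phi (Q1 - Q2) = phi Q1 - phi Q2.
Proof. by rewrite /phi -sumrB; apply: eq_bigr => i _; rewrite coefB L1B mulrBl. Qed.
Lemma phi0 : phi 0 = 0.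
Proof. by rewrite /phi big1 // => i _; rewrite coef0 /L1 big1 ?mul0r // => j _; rewrite coef0 mul0r. Qed.

Lemma phiM c d : phi ((1 + uu) ^+ c * (1 + ww) ^+ d) = (p %| c)%:R * (p %| d)%:R.
Proof.
have -> : (1 + uu) ^+ c = ((1 + 'X) ^+ c)%:P by rewrite /uu -polyC1 -polyCD rmorphXn.
rewrite /phi.
under eq_bigr => b _ do rewrite coefCM coef_1X L1Mn -mulrA.
by rewrite -mulr_sumr L1_binom -(L1_binom d) L1_coef.
Qed.

Inductive ideal (n : nat) : {poly {poly R}} -> Prop :=
 | Id0 : ideal n 0
 | IdD Q1 Q2 : ideal n Q1 -> ideal n Q2 -> ideal n (Q1 + Q2)
 | IdM a b T : (n <= a + b)%N -> ideal n (uu ^+ a * ww ^+ b * T).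

Lemma idealMu n Q T : ideal n Q -> ideal n.+1 (uu * T * Q).
Proof.
elim=> [|Q1 Q2 _ h1 _ h2|a b T' hab]; first by rewrite mulr0; exact: Id0.
  by rewrite mulrDr; exact: IdD.
have -> : uu * T * (uu ^+ a * ww ^+ b * T') = uu ^+ a.+1 * ww ^+ b * (T * T').
  by rewrite exprS; ring.
by apply: IdM; rewrite addSn.
Qed.

Lemma idealMw n Q T : ideal n Q -> ideal n.+1 (ww * T * Q).
Proof.
elim=> [|Q1 Q2 _ h1 _ h2|a b T' hab]; first by rewrite mulr0; exact: Id0.
  by rewrite mulrDr; exact: IdD.
have -> : ww * T * (uu ^+ a * ww ^+ b * T') = uu ^+ a * ww ^+ b.+1 * (T * T').
  by rewrite exprS; ring.
by apply: IdM; rewrite addnS.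
Qed.

Lemma factor c d : exists A B, 1 - (1 + uu) ^+ c * (1 + ww) ^+ d = uu * A + ww * B.
Proof.
have [A ->] := ex_one uu c; have [B ->] := ex_one ww d.
by exists (- A - A * ww * B), (- B); ring.
Qed.

Definition PP (s : seq (nat * nat)) : {poly {poly R}} :=
  foldr (fun x Q => (1 - (1 + uu) ^+ x.1 * (1 + ww) ^+ x.2) * Q) 1 s.

Lemma ideal_PP s : ideal (size s) (PP s).
Proof.
elim: s => [|x s IH] /=.
  have -> : (1 : {poly {poly R}}) = uu ^+ 0 * ww ^+ 0 * 1 by rewrite !expr0 !mul1r.
  by apply: IdM.
have [A [B ->]] := factor x.1 x.2.
by rewrite mulrDl; apply: IdD; [apply: idealMu | apply: idealMw].
Qed.
Lemma L1_0 : L1 0 = 0.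
Proof. by rewrite /L1 big1 // => j _; rewrite coef0 mul0r. Qed.

Lemma phi_ideal n Q : (2 * p - 1 <= n)%N -> ideal n Q -> phi Q = 0.
Proof.
move=> hn; elim=> [|Q1 Q2 _ h1 _ h2|a b T hab]; first exact: phi0.
  by rewrite phiD h1 h2 addr0.
have hp2 : (p <= a)%N \/ (p <= b)%N by lia.
have -> : uu ^+ a * ww ^+ b * T = 'X^b * (('X ^+ a)%:P * T).
  by rewrite /uu /ww rmorphXn; ring.
rewrite /phi big1 // => j _; rewrite coefXnM.
case: ifP => hj; first by rewrite L1_0 mul0r.
case: hp2 => [hpa|hpb]; last by move: hj; rewrite (leq_trans (ltn_ord j) hpb).
by rewrite coefCM L1Xa ?mul0r.
Qed.

Definition Phi c d Q := phi ((1 + uu) ^+ c * (1 + ww) ^+ d * Q).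

Fixpoint Gf c d (s : seq (nat * nat)) : R :=
  match s with
  | [::] => (p %| c)%N%:R * (p %| d)%N%:R
  | x :: s' => Gf c d s' - Gf (c + x.1) (d + x.2) s'
  end.

Lemma Phi_G s c d : Phi c d (PP s) = Gf c d s.
Proof.
elim: s c d => [|x s IH] c d /=; first by rewrite /Phi mulr1 phiM.
rewrite -!IH /Phi -phiB; congr phi.
by rewrite !exprD; ring.
Qed.

Lemma G_eq0 s c d :
  (forall m, ~~ ((p %| c + sumn (map fst (mask m s))) && (p %| d + sumn (map snd (mask m s))))%N) ->
  Gf c d s = 0.
Proof.
elim: s c d => [|x s IH] c d H /=.
  by have := H [::]; rewrite /= !addn0; case: (p %| c)%N; case: (p %| d)%N; rewrite ?mulr0 ?mul0r.
rewrite IH ?(IH (c + x.1)) ?subrr // => m.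
  by have := H (true :: m); rewrite /= !addnA.
by have := H (false :: m).
Qed.

Lemma G_eq1 s :
  (forall m, mask m s != [::] -> ~~ ((p %| sumn (map fst (mask m s))) && (p %| sumn (map snd (mask m s))))%N) ->
  Gf 0 0 s = 1.
Proof.
elim: s => [|x s IH] H /=; first by rewrite dvdn0 mulr1.
rewrite IH ?(G_eq0 (c := 0 + x.1)) ?subr0 // => m.
  by have := H (true :: m); rewrite /= !add0n; apply.
by move=> hm; have := H (false :: m); apply.
Qed.

Lemma davenport_R s : (2 * p - 1 <= size s)%N ->
  exists m, mask m s != [::] /\ (p %| sumn (map fst (mask m s)))%N /\ (p %| sumn (map snd (mask m s)))%N.
Proof.
move=> hs; apply/not_all_not_ex => Hn.
have h1 : Gf 0 0 s = 1.
  apply: G_eq1 => m hm; apply/negP => /andP [a b]; exact: (Hn m).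
have h0 : Gf 0 0 s = 0.
  rewrite -Phi_G /Phi !expr0 !mul1r; exact: phi_ideal hs (ideal_PP s).
by move: (oner_neq0 R); rewrite -h1 h0 eqxx.
Qed.
End Univ.

End Poly.

Local Open Scope group_scope.

Lemma mask_cat_gen (T : Type) (m : bitseq) (s1 s2 : seq T) :
  mask m (s1 ++ s2) = mask (take (size s1) m) s1 ++ mask (drop (size s1) m) s2.
Proof.
elim: s1 m => [|x s1 IH] m; first by rewrite /= take0 drop0.
case: m => [|b m] /=; first by rewrite mask0s.
by rewrite IH; case: b.
Qed.

Lemma exists_pairs (gT : finGroupType) (f : nat * nat -> gT) (A : seq gT) :
  (forall x, x \in A -> exists ij, x = f ij) -> exists ps, A = map f ps.
Proof.
elim: A => [|x A IH] H; first by exists [::].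
have [ij hij] := H x (mem_head _ _).
have [ps hps] := IH (fun y hy => H y (mem_behead (s := x :: A) hy)).
by exists (ij :: ps); rewrite /= hij hps.
Qed.

Lemma prod_pairs (gT : finGroupType) (g z : gT) (ps : seq (nat * nat)) :
  commute g z ->
  \prod_(x <- map (fun ij => g ^+ ij.1 * z ^+ ij.2) ps) x =
  g ^+ sumn (map fst ps) * z ^+ sumn (map snd ps).
Proof.
move=> cgz; elim: ps => [|[i j] ps IH]; first by rewrite big_nil !expg0 mulg1.
rewrite /= big_cons IH /= !expgD -!mulgA; congr (_ * _).
by rewrite !mulgA; congr (_ * _); apply: commuteX2; apply: commute_sym.
Qed.

Lemma block (gT : finGroupType) (G H : {group gT}) (B : seq gT) :
  H \subset G -> {subset B <= G} -> (#|G : H| <= size B)%N ->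
  exists k l, (k < l <= size B)%N /\ \prod_(x <- drop k (take l B)) x \in H.
Proof.
move=> sHG sBG hidx.
pose pr (i : nat) := \prod_(x <- take i B) x.
pose f (i : 'I_(size B).+1) := pr i *: H.
have prG i : pr i \in G.
  by rewrite /pr big_seq; apply: group_prod => x /mem_take /sBG.
have : ~ injective f.
  move=> injf.
  have : #|[set f i | i in 'I_(size B).+1]| <= #|lcosets H G|.
    apply: subset_leq_card; apply/subsetP => X /imsetP [i _ ->].
    by rewrite mem_lcosets mulGSid //; apply: prG.
  by rewrite card_imset // card_ord card_lcosets ltnNge hidx.
move=> hinj.
have [i [j [hij hne]]] : exists i j, f i = f j /\ i <> j.
  apply: NNPP => hn; apply: hinj => i j e; apply: NNPP => ne; apply: hn; exists i, j; done.
have key : forall i j : 'I_(size B).+1, f i = f j -> (i < j)%N ->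
    exists k l, (k < l <= size B)%N /\ \prod_(x <- drop k (take l B)) x \in H.
  move=> i' j' e lt; exists i', j'; split.
    by rewrite lt /= -ltnS ltn_ord.
  have : pr j' \in pr i' *: H by apply/lcoset_eqP; rewrite /f in e; rewrite e.
  case/lcosetP => h hH.
  rewrite /pr -{1}(cat_take_drop i' (take j' B)) -take_min (minn_idPl (ltnW lt)) big_cat /=.
  by move/mulgI ->.
case: (ltngtP i j) => [lt|lt|e]; first exact: key hij lt.
  exact: key (esym hij) lt.
by case: hne; apply: val_inj.
Qed.

Theorem theorem2p7 (gT : finGroupType) (G : {group gT}) (p : nat)
  (S : seq gT) :
  prime p -> odd p ->
  #|G| = (p ^ 3)%N -> ~~ abelian G -> exponent G = p ->
  {subset S <= G} ->
  (forall x, x \in S -> x \notin 'Z(G)) ->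
  size S = (3 * p - 2)%N ->
  (exists2 g, g \in G :\: 'Z(G) &
     (2 * p - 2 <= count (fun x => x \in zclass G p g) S)%N) ->
  has_prod_one_subseq S.
Proof.
move=> pr oddp hG nab hexp sSG nZ hsz [g gGZ hcnt].
have p2 : (1 < p)%N := prime_gt1 pr.
have pG : p.-group G by rewrite /pgroup hG pnatX pnat_id.
have esG := p3group_extraspecial pG nab (eq_leq (etrans (congr1 (logn p) hG) (pfactorK 3 pr))).
have hZ : #|'Z(G)| = p := card_center_extraspecial pG esG.
have [z defZ] : exists z, 'Z(G) = <[z]> by apply/cyclicP; apply: prime_cyclic; rewrite hZ.
move/setDP: gGZ => [gG gNZ].
have zZ : z \in 'Z(G) by rewrite defZ cycle_id.
have zG : z \in G := subsetP (center_sub G) z zZ.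
have gp : g ^+ p = 1 by rewrite -hexp expg_exponent.
have zp : z ^+ p = 1 by rewrite -hexp expg_exponent.
have cgz : commute g z by have /centerP [_ c] := zZ; apply: commute_sym; apply: c.
have ogp : #[g] = p.
  apply/prime_nt_dvdP => //; last by rewrite order_dvdn gp.
  by rewrite order_eq1; apply/eqP => g1; rewrite g1 group1 in gNZ.
have cZg : 'Z(G) \subset 'C(<[g]>).
  apply: subset_trans (subsetIr G 'C(G)) (centS _); by rewrite cycle_subG.
pose H := (<[g]> <*> 'Z(G))%G.
have defH : (H : {set gT}) = <[g]> * 'Z(G) by rewrite /H /= cent_joinEr.
have hHcard : #|H| = (p * p)%N.
  rewrite defH TI_cardMg ?hZ -?orderE ?ogp //.
  by apply: prime_TIg; [rewrite -orderE ogp | rewrite cycle_subG].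
have sHG : H \subset G by rewrite join_subG cycle_subG gG center_sub.
have hidx : #|G : H| = p.
  have := Lagrange sHG; rewrite hHcard hG => e.
  have : (p * p * #|G : H| == p * p * p)%N by rewrite e (expnS p 2) (expnS p 1) expn1 mulnA.
  by rewrite eqn_pmul2l ?muln_gt0 ?prime_gt0 // => /eqP.
pose f (ij : nat * nat) := g ^+ ij.1 * z ^+ ij.2.
have hH : forall x, x \in H -> exists ij, x = f ij.
  move=> x; rewrite defH => /mulsgP [a b /cycleP [i ->]].
  rewrite defZ => /cycleP [j ->] ->; by exists (i, j).
pose K := zclass G p g.
have KH : forall x, x \in K -> x \in H.
  move=> x /imset2P [l u _]; rewrite inE => /andP [uZ _] ->.
  by rewrite defH; apply: mem_mulg => //; apply: mem_cycle.
pose T := filter (fun x => x \in K) S.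
pose A := take (2 * p - 2) T.
pose B := drop (2 * p - 2) T ++ filter (predC (fun x => x \in K)) S.
have pS : perm_eq S (A ++ B).
  by rewrite /A /B catA cat_take_drop perm_sym perm_filterC.
have hA : size A = (2 * p - 2)%N by rewrite size_takel // size_filter.
have hB : size B = p.
  have := perm_size pS; rewrite size_cat hA hsz.
  move: (size B) => n; lia.
have BG : {subset B <= G}.
  by move=> x xB; apply: sSG; rewrite (perm_mem pS) mem_cat xB orbT.
have [k [l [/andP [hkl hlB] hW]]] := block sHG BG (eq_leq (etrans hidx (esym hB))).
pose W := drop k (take l B).
have Wn : W != [::].
  by rewrite -size_eq0 /W size_drop size_takel // subn_eq0 -ltnNge.
have AK : forall x, x \in A -> x \in K.
  by move=> x /mem_take; rewrite mem_filter => /andP [].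
have [psA defA] := exists_pairs (fun x xA => hH x (KH x (AK x xA))).
have [ij hij] := hH _ hW.
have hsz2 : (2 * p - 1 <= size (psA ++ [:: ij]))%N.
  by rewrite size_cat -(size_map f) -defA hA /=; lia.
have [m [hm0 [h1 h2]]] := Poly.davenport_R (pchar_Fp pr) hsz2.
have hU : \prod_(x <- map f (mask m (psA ++ [:: ij]))) x = 1.
  rewrite prod_pairs //; case/dvdnP: h1 => k1 ->; case/dvdnP: h2 => k2 ->.
  by rewrite mulnC expgM gp expg1n (mulnC k2) expgM zp expg1n mulg1.
rewrite mask_cat_gen in hm0 hU.
set m1 := take (size psA) m in hm0 hU; set m2 := drop (size psA) m in hm0 hU.
have hWgen : forall m3 : bitseq, exists Wo : seq gT, (Wo = [::] /\ mask m3 [:: ij] = [::]) \/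
    (Wo = W /\ mask m3 [:: ij] = [:: ij]).
  case=> [|b m2']; first by exists [::]; left.
  case: b; [exists W; right | exists [::]; left]; by split => //=; rewrite mask0.
have [Wo hWo] := hWgen m2.
pose V := mask m1 A ++ Wo.
have hV : \prod_(x <- V) x = 1.
  rewrite map_cat big_cat in hU.
  rewrite /V big_cat defA -map_mask -[RHS]hU; congr (_ * _).
  case: hWo => [[-> ->] | [-> ->]]; first by rewrite !big_nil.
  by rewrite /= big_seq1 hij.
have Vn : V != [::].
  rewrite /V defA -map_mask; move: hm0.
  case: (mask m1 psA) => [|y ys] //= hm.
  case: hWo => [[_ e] | [-> _]]; first by rewrite e in hm.
  exact: Wn.
have hc : forall x, (count_mem x V <= count_mem x S)%N.
  move=> x; rewrite (seq.permP pS) /V !count_cat; apply: leq_add.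
    exact: leq_count_subseq (mask_subseq _ _).
  case: hWo => [[-> _] | [-> _]] //.
  rewrite -count_cat; apply: leq_count_subseq; rewrite /W; exact: subseq_trans (drop_subseq _ k) (take_subseq _ l).
have [m' _ pV] := (count_maskP V S).1 hc.
exists m'; split.
  apply: contra Vn => /eqP e; rewrite e in pV.
  by rewrite -size_eq0 (perm_size pV).
by exists V; split.
Qed.
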